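(* Let $\underline A=(A_1,\dots,A_m)\in\mathcal C_k(d)$ with $\Theta_k(\underline A)>0$. For $1\le i\le m$ let $R_i:=\mathrm{Range}(A_i)$, let $M_i$ be a real $d\times k$ matrix with $M_i^tM_i=I_k$ and $\mathrm{Range}(M_i)=R_i$, and let $C_{i,j}:=M_i^tA_iM_j\in\mathrm{GL}(k,\mathbb R)$. Define $F:X\times\mathbb R^d\to X\times\mathbb R^d$, $F(\omega,v)=(\sigma\omega,A_{\omega_0}v)$; $\tilde F:X\times\mathbb R^k\to X\times\mathbb R^k$, $\tilde F(\omega,v)=(\sigma\omega,\mathbf C(\omega)v)$ with $\mathbf C(\omega):=C_{\omega_1,\omega_0}$; and $H:X\times\mathbb R^k\to X\times\mathbb R^d$, $H(\omega,v)=(\sigma\omega,M_{\omega_0}v)$. Then $F\circ H=H\circ\tilde F$, and $L_i(F)=L_i(\tilde F)$ for $i=1,\dots,k$.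
   Context: Fix integers $m,d\ge1$, $1\le k\le d$, and a probability vector $\underline p=(p_1,\dots,p_m)$ with all $p_j>0$. Let $X=\{1,\dots,m\}^{\mathbb N}$ with the Bernoulli product measure $\mathbf p=\underline p^{\mathbb N}$ and the left shift $\sigma$. $\mathcal C_k(d)$ is the set of tuples $\underline A=(A_1,\dots,A_m)\in{\rm Mat}(d,\mathbb R)^m$ with $\mathrm{rank}(A_j)=k$ for all $j$, and $\Theta_k(\underline A):=\min\{\|\wedge_k(A_aA_b)\|:1\le a,b\le m\}$ with $\wedge_k$ the $k$-th exterior power (matrix of $k\times k$ minors). For a linear cocycle $G(\omega,v)=(\sigma\omega,\mathbf D(\omega)v)$ on $X\times\mathbb R^N$ with iterates $\mathbf D^n(\omega)=\mathbf D(\sigma^{n-1}\omega)\cdots\mathbf D(\omega)$, its $i$-th Lyapunov exponent $L_i(G)\in[-\infty,\infty)$ is the $\mathbf p$-a.s. constant limit $\lim_n\frac1n\log s_i(\mathbf D^n(\omega))$, $s_1\ge s_2\ge\dots$ being singular values. *)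

(* Defs.v *)
From HB Require Import structures.
From mathcomp Require Import all_boot all_order all_algebra.
From mathcomp Require Import all_classical all_reals all_analysis.
From mathcomp Require Import polyrcf.
Set Implicit Arguments. Unset Strict Implicit. Unset Printing Implicit Defensive.
Import Order.TTheory GRing.Theory Num.Theory.
Import numFieldNormedType.Exports.
Local Open Scope classical_set_scope.
Local Open Scope ring_scope.

(* Symbol space X = {1,...,M}^N, with M := m.+1 >= 1 symbols 'I_m.+1 *)
Definition seqspace (m : nat) := nat -> 'I_m.+1.

HB.instance Definition _ m := gen_eqMixin (seqspace m).
HB.instance Definition _ m := gen_choiceMixin (seqspace m).
HB.instance Definition _ m := isPointed.Build (seqspace m) (fun _ => ord0).

Definition left_shift (m : nat) (w : seqspace m) : seqspace m := fun n => w n.+1.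

Definition cylinder (m n : nat) (a : n.-tuple 'I_m.+1) : set (seqspace m) :=
  [set w | forall j : 'I_n, w j = tnth a j].

Definition cylinders (m : nat) : set (set (seqspace m)) :=
  [set C | exists n (a : n.-tuple 'I_m.+1), C = cylinder a].

Definition Xm (m : nat) := g_sigma_algebraType (@cylinders m).

Definition positive_prob_vector (R : realType) (m : nat) (p : 'I_m.+1 -> R) :=
  (forall j, 0 < p j) /\ \sum_j p j = 1.

Definition is_bernoulli (R : realType) (m : nat) (p : 'I_m.+1 -> R)
  (P : probability (Xm m) R) :=
  forall n (a : n.-tuple 'I_m.+1),
    P (cylinder a) = (\prod_(j < n) p (tnth a j))%:E.

Definition real_eigenvalues (R : realType) (N : nat) (B : 'M[R]_N) : seq R :=
  let P := char_poly B in
  sort (fun x y => y <= x) (flatten [seq nseq (mup x P) x | x <- rootsR P]).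

(* i-th singular value (1-based) : square root of the i-th largest eigenvalue
   of A^T A *)
Definition singval (R : realType) (N : nat) (A : 'M[R]_N) (i : nat) : R :=
  Num.sqrt (nth 0 (real_eigenvalues (A^T *m A)) i.-1).

Definition elog (R : realType) (x : R) : \bar R :=
  if x == 0 then -oo%E else (ln x)%:E.

Definition cocycle (R : realType) (m N : nat) (D : seqspace m -> 'M[R]_N)
  : seqspace m * 'cV[R]_N -> seqspace m * 'cV[R]_N :=
  fun pr => (left_shift pr.1, D pr.1 *m pr.2).

Fixpoint cocycle_iter (R : realType) (m N : nat) (D : seqspace m -> 'M[R]_N)
  (n : nat) (w : seqspace m) : 'M[R]_N :=
  match n with
  | 0 => 1%:M
  | n'.+1 => D (iter n' (@left_shift m) w) *m cocycle_iter D n' w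
  end.

Definition lyapunov_exponent (R : realType) (m N : nat)
  (P : probability (Xm m) R) (D : seqspace m -> 'M[R]_N) (i : nat)
  (l : \bar R) : Prop :=
  {ae P, forall w : Xm m,
     (fun n : nat => ((n%:R)^-1)%:E * elog (singval (cocycle_iter D n w) i))%E
       @ \oo --> l}.

Definition incr_map (k d : nat) (f : {ffun 'I_k -> 'I_d}) : bool :=
  [forall i : 'I_k, forall j : 'I_k, (i < j)%N ==> (f i < f j)%N].

(* Euclidean (Frobenius) norm of wedge_k B, the matrix of k x k minors of B,
   indexed by increasing k-tuples of row/column indices *)
Definition wedge_norm (R : realType) (k d : nat) (B : 'M[R]_d) : R :=
  Num.sqrt (\sum_(f : {ffun 'I_k -> 'I_d} | incr_map f)
             \sum_(g : {ffun 'I_k -> 'I_d} | incr_map g)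
                (\det (mxsub f g B)) ^+ 2).

Definition Theta (R : realType) (m k d : nat) (A : 'I_m.+1 -> 'M[R]_d) : \bar R :=
  \big[Order.min/+oo%E]_(a : 'I_m.+1) \big[Order.min/+oo%E]_(b : 'I_m.+1)
     (wedge_norm k (A a *m A b))%:E.

(* Main.v *)
Require Import Defs.
From HB Require Import structures.
From mathcomp Require Import all_boot all_order all_algebra.
From mathcomp Require Import all_classical all_reals all_analysis.
From mathcomp Require Import polyrcf complex zify.
From mathcomp.algebra_tactics Require Import ring lra.
Import Order.TTheory GRing.Theory Num.Theory.
Local Open Scope classical_set_scope.
Local Open Scope ring_scope.

Module Helpers.
Import numFieldNormedType.Exports.
Set Implicit Arguments. Unset Strict Implicit. Unset Printing Implicit Defensive.
Local Open Scope ring_scope.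

Section Spec.
Variable R : rcfType.
Local Notation C := R[i].
Local Notation toC := (real_complex R).
Local Open Scope sesquilinear_scope.

Lemma conjC_toC (x : R) : Num.conj (toC x) = toC x.
Proof. exact: conjc_real. Qed.

Lemma map_conj_toC m n (A : 'M[R]_(m, n)) : map_mx Num.conj (map_mx toC A) = map_mx toC A.
Proof. by apply/matrixP => i j; rewrite !mxE conjC_toC. Qed.

Lemma herm_of_sym N (S : 'M[R]_N) : S^T = S -> map_mx toC S \is hermsymmx.
Proof.
move=> Ss; apply/is_hermitianmxP; rewrite expr0 scale1r.
apply/matrixP => i j; rewrite !mxE conjC_toC.
by rewrite -[in LHS]Ss mxE.
Qed.

Lemma real_toC (x : C) : x \is Num.real -> x = toC (complex.Re x).
Proof.
case: x => a b /orP[]; rewrite lecE /= => /andP[/eqP h _].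
  by rewrite h.
by rewrite -h.
Qed.

Lemma char_poly_conj (F : fieldType) n (P A : 'M[F]_n) : P \in unitmx ->
  char_poly (invmx P *m A *m P) = char_poly A.
Proof.
move=> Pu; rewrite /char_poly /char_poly_mx.
set P' := map_mx polyC P.
have P'u : P' \in unitmx by rewrite map_unitmx.
rewrite !map_mxM map_invmx -/P'.
have X : 'X%:M = invmx P' *m 'X%:M *m P' :> 'M[{poly F}]_n.
  by rewrite -mulmxA -scalar_mxC mulmxA mulVmx // mul1mx.
rewrite {1}X -mulmxBl -mulmxBr !det_mulmx det_inv mulrC mulrA divrr ?mul1r // -unitmxE.
Qed.

Lemma sumn_pred1_uniq (T : eqType) (s : seq T) (f : T -> nat) x : uniq s ->
  sumn [seq ((y == x) * f y)%N | y <- s] = ((x \in s) * f x)%N.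
Proof.
elim: s => //= y s IH /andP[ys us]; rewrite IH // in_cons.
have [<-|nyx] := eqVneq y x.
  by rewrite (negbTE ys) /= mul1n mul0n addn0.
by rewrite /= mul0n.
Qed.

Lemma perm_roots_prod (s : seq R) :
  perm_eq (flatten [seq nseq (mup x (\prod_(y <- s) ('X - y%:P))) x
                   | x <- rootsR (\prod_(y <- s) ('X - y%:P))]) s.
Proof.
set P := \prod_(y <- s) ('X - y%:P).
have P0 : P != 0 by rewrite prodf_seq_neq0; apply/allP => y _; rewrite polyXsubC_eq0.
apply/allP => x _; apply/eqP.
rewrite count_flatten -map_comp.
rewrite (eq_map (g := fun y => ((y == x) * mup y P)%N)); last first.
  by move=> y /=; rewrite count_nseq.
rewrite sumn_pred1_uniq ?uniq_roots //.
have := roots_on_rootsR P0 x; rewrite in_itv /= => <-.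
have [rx|nrx] := boolP (root P x); first by rewrite mul1n mu_prod_XsubC.
rewrite mul0n; apply/esym/count_memPn; apply: contra nrx => xs.
by rewrite /P (big_rem x) //= rootM root_XsubC eqxx.
Qed.

Lemma trmxC_mul m n p (A : 'M[C]_(m, n)) (B : 'M[C]_(n, p)) :
  (A *m B) ^t* = B ^t* *m A ^t*.
Proof. by rewrite trmx_mul map_mxM. Qed.

Lemma quad_diag n (x : 'rV[C]_n) (e : 'rV[C]_n) :
  (x *m diag_mx e *m x ^t*) 0 0 = \sum_j e 0 j * (x 0 j * (x 0 j)^*).
Proof.
rewrite mul_mx_diag !mxE; apply: eq_bigr => j _; rewrite !mxE.
by rewrite -mulrA mulrCA.
Qed.

Lemma dot_sum n (x : 'rV[C]_n) : dotmx x x = \sum_j (x 0 j * (x 0 j)^*).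
Proof. by rewrite dotmxE !mxE; apply: eq_bigr => j _; rewrite !mxE. Qed.

Lemma rank_sum_le m n (I : finType) (P : pred I) (B : I -> 'M[C]_(m, n)) :
  (\rank (\sum_(j | P j) B j)%R <= \sum_(j | P j) \rank (B j))%N.
Proof.
apply: (big_ind2 (fun M k => \rank M <= k)%N) => //.
- by rewrite mxrank0.
- move=> M1 k1 M2 k2 h1 h2; apply: leq_trans (mxrank_add _ _) _.
  exact: leq_add.
Qed.

Lemma rank_diag_pred n (b : pred 'I_n) :
  (\rank (diag_mx (\row_j ((b j)%:R : C))) <= #|b|)%N.
Proof.
rewrite diag_mx_sum_delta.
have -> : \sum_i (\row_j ((b j)%:R : C)) 0 i *: delta_mx i i
          = \sum_(i | b i) (delta_mx i i : 'M[C]_n).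
  rewrite [RHS]big_mkcond; apply: eq_bigr => i _; rewrite mxE.
  by case: (b i); rewrite ?scale1r ?scale0r.
apply: leq_trans (rank_sum_le _ _) _.
rewrite -sum1_card; apply: leq_sum => i _; by rewrite mxrank_delta.
Qed.

Lemma ge_trans : transitive (fun x y : R => y <= x).
Proof. by move=> y x z h1 h2; exact: le_trans h2 h1. Qed.

Lemma ge_refl : reflexive (fun x y : R => y <= x).
Proof. by move=> x; exact: lexx. Qed.

Lemma sorted_ge_count (L : seq R) i : sorted (fun x y => y <= x) L ->
  (0 < i <= size L)%N ->
  (count (fun x => (nth 0%R L i.-1 < x)%R) L <= i.-1)%N /\
  (count (fun x => (x < nth 0%R L i.-1)%R) L <= size L - i)%N.
Proof.
move=> sL /andP[i0 iL].
have key k l : (k <= l)%N -> (l < size L)%N -> nth 0 L l <= nth 0 L k.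
  move=> kl lL; apply: (sorted_leq_nth ge_trans ge_refl 0 sL) => //.
  by rewrite inE (leq_ltn_trans kl).
have i1L : (i.-1 < size L)%N by rewrite (leq_trans _ iL) // prednK.
set t := nth 0%R L i.-1.
split.
  rewrite -(cat_take_drop i.-1 L) count_cat.
  have -> : count (fun x => (t < x)%R) (drop i.-1 L) = 0%N.
    apply/eqP; rewrite -leqn0 leqNgt -has_count; apply/negP => /(has_nthP 0).
    move=> [k]; rewrite size_drop nth_drop => klt.
    rewrite ltNge key ?leq_addr //; by rewrite -ltn_subRL.
  rewrite addn0; apply: leq_trans (count_size _ _) _.
  by rewrite size_take; case: ifP => // /negbT; rewrite -leqNgt.
rewrite -{1}(cat_take_drop i L) count_cat.
have -> : count (fun x => (x < t)%R) (take i L) = 0%N.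
  apply/eqP; rewrite -leqn0 leqNgt -has_count; apply/negP => /(has_nthP 0).
  move=> [k]; rewrite size_takel // => klt.
  have kL : (k < size L)%N by apply: leq_trans klt iL.
  rewrite nth_take // ltNge key //; by rewrite -ltnS prednK.
by rewrite add0n; apply: leq_trans (count_size _ _) _; rewrite size_drop.
Qed.

Lemma card_count (T : finType) (b : pred T) : #|b| = count b (enum T).
Proof. by rewrite cardE size_filter enumT. Qed.

Section SymSpec.
Variables (N : nat) (S : 'M[R]_N).
Hypothesis Ssym : S^T = S.
Local Notation SC := (map_mx toC S).
Definition UU := spectralmx SC.
Definition dd := spectral_diag SC.
Definition rr (j : 'I_N) : R := complex.Re (dd 0 j).

Lemma UU_unitary : UU \is unitarymx.
Proof. exact: spectral_unitarymx. Qed.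

Lemma UU_UUt : UU *m UU ^t* = 1%:M.
Proof. exact/unitarymxP/UU_unitary. Qed.

Lemma UUt_UU : UU ^t* *m UU = 1%:M.
Proof.
have := UU_unitary; rewrite -trmxC_unitary => /unitarymxP.
by rewrite trmxCK.
Qed.

Lemma SC_decomp : SC = UU ^t* *m diag_mx dd *m UU.
Proof.
have /orthomx_spectralP E := hermitian_normalmx (herm_of_sym Ssym).
by rewrite -invmx_unitary ?UU_unitary //; exact: E.
Qed.

Lemma dd_real j : dd 0 j = toC (rr j).
Proof.
have /mxOverP := hermitian_spectral_diag_real (herm_of_sym Ssym).
by move=> /(_ 0 j) /real_toC.
Qed.

Lemma char_poly_S : char_poly S = \prod_(j < N) ('X - (rr j)%:P).
Proof.
apply: (map_poly_inj toC); rewrite map_char_poly rmorph_prod.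
rewrite SC_decomp -invmx_unitary ?UU_unitary // char_poly_conj ?unitarymx_unit ?UU_unitary //.
rewrite char_poly_trig ?diag_mx_is_trig //.
apply: eq_bigr => j _; rewrite /= map_polyXsubC mxE eqxx mulr1n dd_real. done.
Qed.

Definition rseig (B : 'M[R]_N) : seq R :=
  let P := char_poly B in
  sort (fun x y => y <= x) (flatten [seq nseq (mup x P) x | x <- rootsR P]).

Definition rlist := [seq rr j | j <- enum 'I_N].

Lemma rseig_S : rseig S = sort (fun x y => y <= x) rlist.
Proof.
rewrite /rseig; apply/perm_sortP.
- by move=> x y; exact: le_total.
- by move=> x y z h1 h2; exact: le_trans h2 h1.
- by move=> x y /andP[h1 h2]; apply: le_anti; rewrite h1 h2.
have -> : char_poly S = \prod_(y <- rlist) ('X - y%:P).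
  by rewrite char_poly_S big_map big_enum.
exact: perm_roots_prod.
Qed.

Definition xc (y : 'rV[C]_N) := y *m UU ^t*.

Lemma xcK y : xc y *m UU = y.
Proof. by rewrite /xc -mulmxA UUt_UU mulmx1. Qed.

Lemma q_coords y : (y *m SC *m y ^t*) 0 0
  = \sum_j toC (rr j) * (xc y 0 j * (xc y 0 j)^*).
Proof.
rewrite SC_decomp.
have -> : y *m (UU ^t* *m diag_mx dd *m UU) *m y ^t*
          = xc y *m diag_mx dd *m (xc y) ^t*.
  by rewrite /xc trmxC_mul trmxCK !mulmxA.
by rewrite quad_diag; apply: eq_bigr => j _; rewrite dd_real.
Qed.

Lemma dot_coords y : dotmx y y = \sum_j (xc y 0 j * (xc y 0 j)^*).
Proof.
rewrite -dot_sum !dotmxE /xc trmxC_mul trmxCK !mulmxA -[y *m _ *m _]mulmxA.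
by rewrite UUt_UU mulmx1.
Qed.

Definition Kb (b : pred 'I_N) := kermx (UU ^t* *m diag_mx (\row_j ((b j)%:R : C))).

Lemma Kb_coord b y : (y <= Kb b)%MS -> forall j, b j -> xc y 0 j = 0.
Proof.
move=> yK j bj; move: yK; rewrite sub_kermx mulmxA -/(xc y).
by move=> /eqP /matrixP /(_ 0 j); rewrite mul_mx_diag !mxE bj mulr1.
Qed.

Lemma rank_Kb b : (N - #|b| <= \rank (Kb b))%N.
Proof.
rewrite /Kb mxrank_ker leq_sub2l //.
exact: leq_trans (mxrankM_maxr _ _) (rank_diag_pred b).
Qed.

Lemma rseig_sorted : sorted (fun x y => y <= x) (rseig S).
Proof. rewrite rseig_S; apply: sort_sorted => x y; exact: le_total. Qed.

Lemma rseig_size : size (rseig S) = N.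
Proof. by rewrite rseig_S size_sort size_map size_enum_ord. Qed.

Lemma rseig_count (p : pred R) : count p (rseig S) = #|[pred j | p (rr j)]|.
Proof.
rewrite rseig_S (permP (permEl (perm_sort _ _))) card_count count_map.
by apply: eq_count.
Qed.

Lemma eig_upper p i (V : 'M[C]_(p, N)) (c : R) :
  (0 < i <= N)%N -> (i <= \rank V)%N ->
  (forall y : 'rV_N, (y <= V)%MS -> toC c * dotmx y y <= (y *m SC *m y ^t*) 0 0) ->
  c <= nth 0 (rseig S) i.-1.
Proof.
move=> iN iV hV.
set t := nth 0 (rseig S) i.-1.
have iL : (0 < i <= size (rseig S))%N by rewrite rseig_size.
have [cnt1 _] := sorted_ge_count rseig_sorted iL.
rewrite -/t rseig_count in cnt1.
pose b : pred 'I_N := fun j => t < rr j.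
have cnt2 : (#|b| < i)%N.
  have -> : #|b| = #|[pred j | t < rr j]| by apply: eq_card.
  by move: iN cnt1; case: (i).
have rK : (N - #|b| <= \rank (Kb b))%N by exact: rank_Kb.
have hcap : (\rank (V + Kb b)%MS + \rank (V :&: Kb b)%MS)%N = (\rank V + \rank (Kb b))%N.
  exact: mxrank_sum_cap.
have hsum : (\rank (V + Kb b)%MS <= N)%N by exact: rank_leq_col.
have hb : (#|b| <= N)%N by apply: leq_trans (max_card _) _; rewrite card_ord.
have rW : (0 < \rank (V :&: Kb b)%MS)%N.
  move: hcap hsum rK iV cnt2 hb; generalize (\rank (V + Kb b) : nat) (\rank (V :&: Kb b) : nat) (\rank V : nat) (\rank (Kb b) : nat) (#|b| : nat). move=> *. lia.
set W := (V :&: Kb b)%MS in rW.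
have W0 : W != 0 by rewrite -mxrank_eq0 -lt0n.
set y := nz_row W.
have y0 : y != 0 by rewrite nz_row_eq0.
have yW : (y <= W)%MS := nz_row_sub W.
have yV : (y <= V)%MS := submx_trans yW (capmxSl _ _).
have yK : (y <= Kb b)%MS := submx_trans yW (capmxSr _ _).
have hq : (y *m SC *m y ^t*) 0 0 <= toC t * dotmx y y.
  rewrite q_coords dot_coords mulr_sumr; apply: ler_sum => j _.
  have [tj|jt] := ltP t (rr j).
    by rewrite (Kb_coord yK) // mul0r !mulr0.
  by apply: ler_wpM2r; [exact: mul_conjC_ge0 | rewrite lecR].
have hpos : 0 < dotmx y y by rewrite dnorm_gt0.
have := le_trans (hV y yV) hq.
by rewrite ler_pM2r // lecR.
Qed.

Lemma eig_lower i : (0 < i <= N)%N ->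
  exists V : 'M[C]_N, (i <= \rank V)%N /\
  (forall y : 'rV_N, (y <= V)%MS ->
     toC (nth 0 (rseig S) i.-1) * dotmx y y <= (y *m SC *m y ^t*) 0 0).
Proof.
move=> iN.
set t := nth 0 (rseig S) i.-1.
have iL : (0 < i <= size (rseig S))%N by rewrite rseig_size.
have [_ cnt1] := sorted_ge_count rseig_sorted iL.
rewrite -/t rseig_count rseig_size in cnt1.
pose b : pred 'I_N := fun j => rr j < t.
have cnt2 : (#|b| <= N - i)%N.
  by have -> : #|b| = #|[pred j | rr j < t]| by apply: eq_card.
exists (Kb b); split.
  have H : (i <= N - #|b|)%N.
    by move: cnt2 iN; generalize (#|b| : nat); move=> *; lia.
  exact: leq_trans H (rank_Kb b).
move=> y yK.
rewrite q_coords dot_coords mulr_sumr; apply: ler_sum => j _.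
have [jt|tj] := ltP (rr j) t.
  by rewrite (Kb_coord yK) // mul0r !mulr0.
by apply: ler_wpM2r; [exact: mul_conjC_ge0 | rewrite lecR].
Qed.
End SymSpec.
End Spec.

Section Gauge.
Variable R : rcfType.
Local Notation C := R[i].
Local Notation toC := (real_complex R).
Local Open Scope sesquilinear_scope.

Definition gg m p (B : 'M[R]_(m, p)) (y : 'rV[C]_m) :=
  dotmx (y *m map_mx toC B) (y *m map_mx toC B).

Definition lam N (A : 'M[R]_N) i := nth 0 (rseig (A^T *m A)) i.-1.

Lemma trC_toC m n (B : 'M[R]_(m, n)) : (map_mx toC B) ^t* = map_mx toC B^T.
Proof. by rewrite map_trmx map_conj_toC. Qed.

Lemma q_gg N (A : 'M[R]_N) y :
  (y *m map_mx toC (A^T *m A) *m y ^t*) 0 0 = gg A^T y.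
Proof.
by rewrite /gg dotmxE trmxC_mul trC_toC trmxK map_mxM !mulmxA.
Qed.

Lemma sym_AtA N (A : 'M[R]_N) : (A^T *m A)^T = A^T *m A.
Proof. by rewrite trmx_mul trmxK. Qed.

Lemma lam_upper N (A : 'M[R]_N) p i (V : 'M[C]_(p, N)) (c : R) :
  (0 < i <= N)%N -> (i <= \rank V)%N ->
  (forall y : 'rV_N, (y <= V)%MS -> toC c * dotmx y y <= gg A^T y) ->
  c <= lam A i.
Proof.
move=> iN iV hV; apply: (eig_upper (sym_AtA A) iN iV) => y yV.
by rewrite q_gg; exact: hV.
Qed.

Lemma lam_lower N (A : 'M[R]_N) i : (0 < i <= N)%N ->
  exists V : 'M[C]_N, (i <= \rank V)%N /\
  (forall y : 'rV_N, (y <= V)%MS -> toC (lam A i) * dotmx y y <= gg A^T y).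
Proof.
move=> iN; have [V [rV hV]] := eig_lower (sym_AtA A) iN.
by exists V; split => // y yV; rewrite -q_gg; exact: hV.
Qed.

Lemma lam_ge0 N (A : 'M[R]_N) i : (0 < i <= N)%N -> 0 <= lam A i.
Proof.
move=> iN; apply: (lam_upper (V := 1%:M)) => //.
  by rewrite mxrank1; case/andP: iN.
by move=> y _; rewrite mul0r /gg dnorm_ge0.
Qed.

Definition cstB m p (B : 'M[R]_(m, p)) : R := 1 + \sum_j \sum_l (B l j) ^+ 2.

Lemma cstB_ge1 m p (B : 'M[R]_(m, p)) : 1 <= cstB B.
Proof.
rewrite /cstB lerDl; apply: sumr_ge0 => j _; apply: sumr_ge0 => l _.
exact: sqr_ge0.
Qed.

Lemma gg_bound m p (B : 'M[R]_(m, p)) y : gg B y <= toC (cstB B) * dotmx y y.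
Proof.
pose v (j : 'I_p) : 'rV[C]_m := \row_l toC (B l j).
have ev j : (y *m map_mx toC B) 0 j = dotmx y (v j).
  rewrite dotmxE !mxE; apply: eq_bigr => l _; rewrite !mxE.
  by rewrite conjC_toC.
have vv j : dotmx (v j) (v j) = toC (\sum_l (B l j) ^+ 2).
  rewrite dot_sum rmorph_sum; apply: eq_bigr => l _.
  by rewrite !mxE conjC_toC rmorphXn expr2.
have dy0 : 0 <= dotmx y y := dnorm_ge0 _ y.
rewrite /gg dot_sum.
have H : \sum_j ((y *m map_mx toC B) 0 j * ((y *m map_mx toC B) 0 j)^* )
   <= \sum_j (dotmx y y * toC (\sum_l (B l j) ^+ 2)).
  apply: ler_sum => j _; rewrite ev -normCK -vv.
  exact: (CauchySchwarz _ y (v j)).1.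
apply: le_trans H _.
rewrite -mulr_sumr mulrC; apply: ler_wpM2r => //.
by rewrite -rmorph_sum lecR /cstB lerDr.
Qed.

Lemma gg_mul m n p (B1 : 'M[R]_(m, n)) (B2 : 'M[R]_(n, p)) y :
  gg (B1 *m B2) y = gg B2 (y *m map_mx toC B1).
Proof. by rewrite /gg map_mxM !mulmxA. Qed.

Lemma gg0 m p (B : 'M[R]_(m, p)) : gg B 0 = 0.
Proof. by rewrite /gg mul0mx dotmxE mul0mx mxE. Qed.

Lemma dot_gg m (y : 'rV[C]_m) : dotmx y y = gg 1%:M y.
Proof. by rewrite /gg map_mx1 mulmx1. Qed.

Lemma compare d k i (E : 'M[R]_(d, k)) (Y : 'M[R]_(k, d)) (Z : 'M[R]_(d, k))
    (Q : 'M[R]_k) :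
  Y *m Z = 1%:M ->
  (forall z : 'rV[C]_k, gg Q^T z = gg E^T z) ->
  (0 < i <= k)%N -> (k <= d)%N ->
  lam (E *m Y) i <= cstB Y^T * lam Q i /\ lam Q i <= cstB Z^T * lam (E *m Y) i.
Proof.
move=> YZ hQ ik kd.
have id : (0 < i <= d)%N by case/andP: ik => -> /= /leq_trans; apply.
set P := E *m Y.
have lQ0 := lam_ge0 Q ik.
have lP0 := lam_ge0 P id.
have K1 := cstB_ge1 Y^T.
have K2 := cstB_ge1 Z^T.
have K1p : 0 < cstB Y^T := lt_le_trans ltr01 K1.
have K2p : 0 < cstB Z^T := lt_le_trans ltr01 K2.
have ggP y : gg P^T y = gg E^T (y *m map_mx toC Y^T) by rewrite /P trmx_mul gg_mul.
split.
  have [lP_le0|lP_gt0] := lerP (lam P i) 0.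
    by apply: le_trans lP_le0 _; apply: mulr_ge0 => //; apply: ltW.
  have [V [rV hV]] := lam_lower P id.
  set Y' := map_mx toC Y^T.
  have inj : (V :&: kermx Y')%MS == 0.
    apply/negPn/negP => W0.
    set W := (V :&: kermx Y')%MS in W0.
    have u0 : nz_row W != 0 by rewrite nz_row_eq0.
    have uW : (nz_row W <= W)%MS := nz_row_sub W.
    have uV : (nz_row W <= V)%MS := submx_trans uW (capmxSl _ _).
    have uK : (nz_row W <= kermx Y')%MS := submx_trans uW (capmxSr _ _).
    move: (hV _ uV); rewrite ggP; move: uK; rewrite sub_kermx => /eqP ->.
    rewrite gg0 => H.
    have Hp : 0 < toC (lam P i) * dotmx (nz_row W) (nz_row W).
      by apply: mulr_gt0; [rewrite ltcR | rewrite dnorm_gt0].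
    by have := lt_le_trans Hp H; rewrite ltxx.
  have rV' : (i <= \rank (V *m Y'))%N by rewrite (mxrank_injP _ inj).
  suff h : lam P i / cstB Y^T <= lam Q i.
    have := ler_wpM2l (ltW K1p) h.
    by rewrite mulrCA divff ?mulr1 ?gt_eqF.
  apply: (lam_upper (V := V *m Y')) => //.
  move=> z /submxP [x ->]; rewrite hQ mulmxA.
  set u := x *m V.
  have uV : (u <= V)%MS by exact: submxMl.
  rewrite -ggP; apply: le_trans (hV u uV).
  have hb : dotmx (u *m Y') (u *m Y') <= toC (cstB Y^T) * dotmx u u := gg_bound Y^T u.
  apply: le_trans (ler_wpM2l _ hb) _.
    by rewrite ler0c divr_ge0 // ltW.
  by rewrite mulrA -rmorphM divfK ?gt_eqF.
have [V [rV hV]] := lam_lower Q ik.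
set Z' := map_mx toC Z^T.
set Y' := map_mx toC Y^T.
have ZY : Z' *m Y' = 1%:M by rewrite -map_mxM -trmx_mul YZ trmx1 map_mx1.
have rV' : (i <= \rank (V *m Z'))%N.
  apply: leq_trans rV _; rewrite -{1}[V]mulmx1 -ZY mulmxA; exact: mxrankM_maxl.
suff h : lam Q i / cstB Z^T <= lam P i.
  have := ler_wpM2l (ltW K2p) h.
  by rewrite mulrCA divff ?mulr1 ?gt_eqF.
apply: (lam_upper (V := V *m Z')) => //.
move=> y /submxP [x ->]; rewrite ggP -/Y' mulmxA.
set z := x *m V.
have zV : (z <= V)%MS by exact: submxMl.
rewrite -(mulmxA z) ZY mulmx1 -hQ; apply: le_trans (hV z zV).
have hb : dotmx (z *m Z') (z *m Z') <= toC (cstB Z^T) * dotmx z z := gg_bound Z^T z.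
apply: le_trans (ler_wpM2l _ hb) _.
  by rewrite ler0c divr_ge0 // ltW.
by rewrite mulrA -rmorphM divfK ?gt_eqF.
Qed.
End Gauge.

Local Open Scope ring_scope.
Local Notation toC := (real_complex _).
Local Open Scope sesquilinear_scope.

Section Seq.
Variable R : realType.
Local Open Scope ereal_scope.

Definition close (x y : \bar R) (K : R) :=
  (x = -oo /\ y = -oo) \/
  exists a b : R, x = a%:E /\ y = b%:E /\ (`|a - b| <= K)%R.

Lemma close_sym x y K : close x y K -> close y x K.
Proof.
case=> [[-> ->]|[a [b [-> [-> h]]]]]; first by left.
by right; exists b, a; rewrite distrC.
Qed.

Lemma pt_ineq (x y : \bar R) (cc cc' K : R) : (0 < cc)%R -> (0 < cc')%R ->
  close x y K ->
  ((cc' / cc)%R%:E * (cc%:E * x) + (- (cc' * K))%R%:E <= cc'%:E * y) /\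
  (cc'%:E * y <= (cc' / cc)%R%:E * (cc%:E * x) + (cc' * K)%R%:E).
Proof.
move=> c0 c'0 [[-> ->]|[a [b [-> [-> h]]]]].
  rewrite !gt0_muleNy ?lte_fin ?divr_gt0 //.
rewrite -!EFinM -!EFinD !lee_fin.
have e : (cc' / cc * (cc * a) = cc' * a)%R by rewrite mulrA divfK ?gt_eqF.
rewrite e.
have h1 : (a - b <= K)%R := le_trans (ler_norm _) h.
have h2 : (b - a <= K)%R by rewrite distrC in h; exact: le_trans (ler_norm _) h.
have p1 := ler_wpM2l (ltW c'0) h1.
have p2 := ler_wpM2l (ltW c'0) h2.
split; nra.
Qed.

Lemma EFin_cvg_seq (r : nat -> R) (a : R) :
  (r n @[n --> \oo] --> a) -> ((r n)%:E @[n --> \oo] --> a%:E).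
Proof. by move=> h; apply: cvg_EFin => //; apply: nearW. Qed.

Lemma gen_cvg (u v : nat -> \bar R) (c c' : nat -> R) (K : R) (l : \bar R) :
  (forall n, 0 < c n)%R -> (forall n, 0 < c' n)%R ->
  (forall n, close (u n) (v n) K) ->
  ((c' n / c n)%R @[n --> \oo] --> (1%R : R)) ->
  ((c' n * K)%R @[n --> \oo] --> (0%R : R)) ->
  ((c n)%:E * u n @[n --> \oo] --> l) ->
  ((c' n)%:E * v n @[n --> \oo] --> l).
Proof.
move=> c0 c'0 cl ha hb hf.
have hA := EFin_cvg_seq ha.
have hB := EFin_cvg_seq hb.
have hBn : ((- (c' n * K))%R%:E @[n --> \oo] --> 0%:E).
  by apply: EFin_cvg_seq; rewrite -oppr0; apply: cvgN.
have d1 : 1%:E *? l.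
  by case: l hf => [r| |] _; [apply: mule_def_fin | apply: mule_def_neq0_infty; rewrite ?onee_eq0 ..].
have hM : ((c' n / c n)%R%:E * ((c n)%:E * u n) @[n --> \oo] --> l).
  by rewrite -[l]mul1e; apply: cvgeM.
have dl : l +? 0%:E by rewrite fin_num_adde_defl.
have hU : ((c' n / c n)%R%:E * ((c n)%:E * u n) + (c' n * K)%R%:E @[n --> \oo] --> l).
  by rewrite -[l]adde0; apply: cvgeD.
have hL : ((c' n / c n)%R%:E * ((c n)%:E * u n) + (- (c' n * K))%R%:E @[n --> \oo] --> l).
  by rewrite -[l]adde0; apply: cvgeD.
apply: (squeeze_cvge _ hL hU).
by apply: nearW => n; apply/andP; apply: pt_ineq.
Qed.

Lemma sqrt_bound (x y K : R) : (0 <= y)%R -> (1 <= K)%R -> (x <= K * y)%R ->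
  (Num.sqrt x <= K * Num.sqrt y)%R.
Proof.
move=> y0 K1 h.
have K0 : (0 <= K)%R := le_trans ler01 K1.
have h2 : (x <= K ^+ 2 * y)%R.
  apply: le_trans h _; apply: ler_wpM2r => //.
  by rewrite expr2 ler_peMl.
have := h2; rewrite -ler_sqrt ?mulr_ge0 ?sqr_ge0 // sqrtrM ?sqr_ge0 //.
by rewrite sqrtr_sqr ger0_norm.
Qed.

Lemma ln_bound (x y K : R) : (0 < x)%R -> (0 < y)%R -> (1 <= K)%R ->
  (x <= K * y)%R -> (ln x <= ln K + ln y)%R.
Proof.
move=> x0 y0 K1 h.
have K0 : (0 < K)%R := lt_le_trans ltr01 K1.
by rewrite -lnM ?posrE // ler_ln ?posrE ?mulr_gt0.
Qed.

Lemma close_sqrt (x y K1 K2 : R) : (0 <= x)%R -> (0 <= y)%R ->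
  (1 <= K1)%R -> (1 <= K2)%R -> (x <= K1 * y)%R -> (y <= K2 * x)%R ->
  close (elog (Num.sqrt x)) (elog (Num.sqrt y)) (ln K1 + ln K2).
Proof.
move=> x0 y0 K1g K2g hxy hyx.
have [x0'|xp] := eqVneq x 0%R.
  rewrite x0' mulr0 in hyx; rewrite x0'.
  have -> : y = 0%R by apply/le_anti; rewrite y0 andbT.
  by left; rewrite /elog sqrtr0 eqxx.
have xp' : (0 < x)%R by rewrite lt_def xp x0.
have yp : (0 < y)%R.
  rewrite lt_def y0 andbT; apply/eqP => y0'; move: hxy; rewrite y0' mulr0.
  by rewrite leNgt xp'.
have sx : (0 < Num.sqrt x)%R by rewrite sqrtr_gt0.
have sy : (0 < Num.sqrt y)%R by rewrite sqrtr_gt0.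
right; exists (ln (Num.sqrt x)), (ln (Num.sqrt y)).
rewrite /elog (negbTE (lt0r_neq0 sx)) (negbTE (lt0r_neq0 sy)); split => //; split => //.
have l1 := ln_bound sx sy K1g (sqrt_bound y0 K1g hxy).
have l2 := ln_bound sy sx K2g (sqrt_bound x0 K2g hyx).
have g1 := ln_ge0 K1g.
have g2 := ln_ge0 K2g.
rewrite ler_norml; apply/andP; split; lra.
Qed.
End Seq.

Section Lims.
Variable R : realType.

Lemma ratio1 (n : nat) : ((n.+2%:R)^-1 / (n.+1%:R)^-1 : R) = 1 - harmonic n.+1.
Proof.
rewrite /harmonic /= -[n.+2%:R]natr1 -[n.+1%:R]natr1.
have h1 : (n%:R + 1 : R) != 0 by rewrite natr1 pnatr_eq0.
have h2 : (n%:R + 1 + 1 : R) != 0 by rewrite !natr1 pnatr_eq0.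
by field; rewrite h1 h2.
Qed.

Lemma ratio2 (n : nat) : ((n.+1%:R)^-1 / (n.+2%:R)^-1 : R) = 1 + harmonic n.
Proof.
rewrite /harmonic /= -[n.+2%:R]natr1 -[n.+1%:R]natr1.
have h1 : (n%:R + 1 : R) != 0 by rewrite natr1 pnatr_eq0.
have h2 : (n%:R + 1 + 1 : R) != 0 by rewrite !natr1 pnatr_eq0.
by field; rewrite h1 h2.
Qed.

Lemma harm_shift : (harmonic n.+1 : R) @[n --> \oo] --> (0 : R).
Proof. have := @cvg_harmonic R; by rewrite -cvg_shiftS. Qed.

Lemma lim1 : ((n.+2%:R)^-1 / (n.+1%:R)^-1 : R) @[n --> \oo] --> (1 : R).
Proof.
have -> : (fun n : nat => ((n.+2%:R)^-1 / (n.+1%:R)^-1 : R))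
          = (fun n => 1 - harmonic n.+1) by apply: funext => n; exact: ratio1.
rewrite -[X in _ --> X]subr0; apply: cvgB; [exact: cvg_cst | exact: harm_shift].
Qed.

Lemma lim2 : ((n.+1%:R)^-1 / (n.+2%:R)^-1 : R) @[n --> \oo] --> (1 : R).
Proof.
have -> : (fun n : nat => ((n.+1%:R)^-1 / (n.+2%:R)^-1 : R))
          = (fun n => 1 + harmonic n) by apply: funext => n; exact: ratio2.
rewrite -[X in _ --> X]addr0; apply: cvgD; [exact: cvg_cst | exact: cvg_harmonic].
Qed.

Lemma lim3 (K : R) : ((n.+1%:R)^-1 * K : R) @[n --> \oo] --> (0 : R).
Proof.
rewrite -(mul0r K); apply: cvgM; [exact: cvg_harmonic | exact: cvg_cst].
Qed.

Lemma lim4 (K : R) : ((n.+2%:R)^-1 * K : R) @[n --> \oo] --> (0 : R).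
Proof.
rewrite -(mul0r K); apply: cvgM; [exact: harm_shift | exact: cvg_cst].
Qed.

End Lims.

Section Cocyc.
Variables (R : realType) (m d k : nat).
Variables (A : 'I_m.+1 -> 'M[R]_d) (M : 'I_m.+1 -> 'M[R]_(d, k)).
Hypothesis hM : forall i, (M i)^T *m M i = 1%:M.
Hypothesis hR : forall i, ((M i)^T == (A i)^T)%MS.

Lemma projA j : M j *m (M j)^T *m A j = A j.
Proof.
move: (hR j) => /andP[_ /submxP [X hX]].
have -> : A j = M j *m X^T by rewrite -[A j]trmxK hX trmx_mul trmxK.
by rewrite -[M j *m _ *m _]mulmxA [(M j)^T *m _]mulmxA hM mul1mx.
Qed.

Lemma iter_shift n (w : seqspace m) j : iter n (@left_shift m) w j = w (n + j)%N.
Proof.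
elim: n w j => [|n IH] w j //=.
by rewrite /left_shift IH addnS.
Qed.

Let DA := fun w : seqspace m => A (w 0%N).
Let DC := fun w : seqspace m => (M (w 1%N))^T *m A (w 1%N) *m M (w 0%N).

Lemma cocycle_rel n w : cocycle_iter DA n.+1 w
  = (M (w n) *m cocycle_iter DC n w) *m ((M (w 0%N))^T *m A (w 0%N)).
Proof.
elim: n => [|n IH].
  by rewrite /= /DA mulmx1 mulmx1 mulmxA projA.
have stepA : cocycle_iter DA n.+2 w
  = DA (iter n.+1 (@left_shift m) w) *m cocycle_iter DA n.+1 w by [].
have stepC : cocycle_iter DC n.+1 w
  = DC (iter n (@left_shift m) w) *m cocycle_iter DC n w by [].
rewrite stepA stepC IH /DA /DC !iter_shift !addn0 addn1.
by rewrite !mulmxA projA.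
Qed.

Lemma gg_iso (Q : 'M[R]_k) (Mn : 'M[R]_(d, k)) : Mn^T *m Mn = 1%:M ->
  forall z, gg Q^T z = gg (Mn *m Q)^T z.
Proof.
move=> hMn z.
have key : forall x : 'rV[R[i]]_k,
    dotmx (x *m map_mx toC Mn^T) (x *m map_mx toC Mn^T) = dotmx x x.
  move=> x; rewrite !dotmxE trmxC_mul trC_toC trmxK mulmxA.
  by rewrite -(mulmxA x) -map_mxM hMn map_mx1 mulmx1.
by rewrite trmx_mul gg_mul {2}/gg key.
Qed.

Lemma right_inv j : \rank (A j) = k ->
  exists Z : 'M[R]_(d, k), ((M j)^T *m A j) *m Z = 1%:M.
Proof.
move=> rA; set Y := (M j)^T *m A j.
have rY : \rank Y = k.
  apply/eqP; rewrite eqn_leq rank_leq_row /= -{1}rA.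
  by rewrite -{1}(projA j) -mulmxA mxrankM_maxr.
have : row_full Y^T by rewrite /row_full mxrank_tr rY.
case/row_fullP => B hB; exists B^T.
by rewrite -[Y]trmxK -trmx_mul hB trmx1.
Qed.
Lemma per_w i (w : seqspace m) (l : \bar R) :
  (forall j, \rank (A j) = k) -> (k <= d)%N -> (0 < i <= k)%N ->
  ((((n%:R)^-1)%:E * elog (singval (cocycle_iter DA n w) i))%E @[n --> \oo] --> l) <->
  ((((n%:R)^-1)%:E * elog (singval (cocycle_iter DC n w) i))%E @[n --> \oo] --> l).
Proof.
move=> hrank kd ik.
have id : (0 < i <= d)%N by case/andP: ik => -> /= /leq_trans; apply.
have [Z hZ] := right_inv (hrank (w 0%N)).
set Y0 := (M (w 0%N))^T *m A (w 0%N) in hZ.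
set Kc := ln (cstB Y0^T) + ln (cstB Z^T).
have cl : forall n, close (elog (singval (cocycle_iter DA n.+2 w) i))
                          (elog (singval (cocycle_iter DC n.+1 w) i)) Kc.
  move=> n; rewrite cocycle_rel -/Y0.
  set Q := cocycle_iter DC n.+1 w.
  have [c1 c2] := compare hZ (gg_iso Q (hM (w n.+1))) ik kd.
  apply: close_sqrt => //.
  - exact: lam_ge0.
  - exact: lam_ge0.
  - exact: cstB_ge1.
  - exact: cstB_ge1.
split => h.
  have h2 := h; rewrite -cvg_shiftS -cvg_shiftS /= in h2.
  rewrite -cvg_shiftS /=.
  apply: (gen_cvg (u := fun n => elog (singval (cocycle_iter DA n.+2 w) i))
                  (v := fun n => elog (singval (cocycle_iter DC n.+1 w) i))
                  (c := fun n => (n.+2%:R)^-1) (c' := fun n => (n.+1%:R)^-1)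
                  (K := Kc)).
  - by move=> n; rewrite invr_gt0.
  - by move=> n; rewrite invr_gt0.
  - exact: cl.
  - exact: lim2.
  - exact: lim3.
  - exact: h2.
have h2 := h; rewrite -cvg_shiftS /= in h2.
rewrite -cvg_shiftS -cvg_shiftS /=.
apply: (gen_cvg (v := fun n => elog (singval (cocycle_iter DA n.+2 w) i))
                (u := fun n => elog (singval (cocycle_iter DC n.+1 w) i))
                (c' := fun n => (n.+2%:R)^-1) (c := fun n => (n.+1%:R)^-1)
                (K := Kc)).
- by move=> n; rewrite invr_gt0.
- by move=> n; rewrite invr_gt0.
- by move=> n; apply: close_sym.
- exact: lim1.
- exact: lim4.
- exact: h2.
Qed.

End Cocyc.


End Helpers.
Import Helpers.

Theorem proposition4p5 (R : realType) (m d k : nat) (p : 'I_m.+1 -> R)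
  (P : probability (Xm m) R)
  (A : 'I_m.+1 -> 'M[R]_d) (M : 'I_m.+1 -> 'M[R]_(d, k)) :
  (1 <= k <= d)%N ->
  positive_prob_vector p -> is_bernoulli p P ->
  (forall j, \rank (A j) = k) ->
  (0 < Theta k A)%E ->
  (forall i, (M i)^T *m M i = 1%:M) ->
  (forall i, ((M i)^T == (A i)^T)%MS) ->
  let C := fun i j => (M i)^T *m A i *m M j in
  let DA := fun w : seqspace m => A (w 0%N) in
  let DC := fun w : seqspace m => C (w 1%N) (w 0%N) in
  let F := cocycle DA in
  let Ft := cocycle DC in
  let H : seqspace m * 'cV[R]_k -> seqspace m * 'cV[R]_d :=
    fun pr => (left_shift pr.1, M (pr.1 0%N) *m pr.2) in
  (forall pr, F (H pr) = H (Ft pr)) /\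
  (forall i, (1 <= i <= k)%N -> forall l : \bar R,
     lyapunov_exponent P DA i l <-> lyapunov_exponent P DC i l).
Proof.
move=> hk hp hP hrank hTheta hM hR C DA DC F Ft H.
have kd : (k <= d)%N by case/andP: hk.
split.
  case=> w v; rewrite /F /Ft /H /cocycle /DA /DC /C /=.
  by rewrite !mulmxA (projA hM hR).
move=> i hi l.
have E := fun w => per_w hM hR w l hrank kd hi.
rewrite /lyapunov_exponent.
split => h; apply: filterS h => w /=; apply (E w).
Qed.
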